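(* Let $\mathcal{O}\subset\mathbb{R}^n$ be open and let $V_1,\dots,V_K:\mathcal{O}\to\mathbb{R}$ be proper piecewise $C^1$ functions on $\mathcal{O}$. Then the functions $V_M,V_m:\mathcal{O}\to\mathbb{R}$ defined by $V_M(x):=\max_{i=1,\dots,K}V_i(x)$ and $V_m(x):=\min_{i=1,\dots,K}V_i(x)$ are proper piecewise $C^1$ on $\mathcal{O}$.
   Context: For open $\mathcal{O}\subset\mathbb{R}^n$, a continuous $V:\mathcal{O}\to\mathbb{R}$ is proper piecewise $C^1$ on $\mathcal{O}$ if there exist $\mathcal{I}=\{1,\dots,N\}$, closed sets $\mathcal{X}_i\subset\mathbb{R}^n$, open sets $\mathcal{O}_i\subset\mathbb{R}^n$ and continuously differentiable $W_i:\mathcal{O}_i\to\mathbb{R}$ ($i\in\mathcal{I}$) such that: (A) $\mathcal{X}_i\cap\mathcal{O}\subset\mathcal{O}_i$ for all $i$; (B) $\overline{\mathrm{int}(\mathcal{X}_i)}=\mathcal{X}_i$ for all $i$; (C) $\mathcal{O}\subset\bigcup_{i\in\mathcal{I}}\mathcal{X}_i$; (D) $V(x)=W_i(x)$ whenever $x\in\mathcal{X}_i\cap\mathcal{O}$. *)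

(* Defs.v *)
From HB Require Import structures.
From mathcomp Require Import all_boot all_order all_algebra.
From mathcomp Require Import all_classical all_reals all_analysis.
Set Implicit Arguments. Unset Strict Implicit. Unset Printing Implicit Defensive.
Import Order.TTheory GRing.Theory Num.Theory.
Import numFieldNormedType.Exports.
Local Open Scope classical_set_scope.
Local Open Scope ring_scope.

(* W is continuously differentiable on the open set U: W is (Fréchet)
   differentiable at every point of U, and its derivative (represented by the
   row vector of its values on the standard basis, i.e. the gradient) depends
   continuously on x in U. *)
Definition C1_on (R : realType) (n : nat) (U : set 'rV[R]_n) (W : 'rV[R]_n -> R) : Prop :=
  (forall x, U x -> differentiable W x) /\
  {in U, continuous (fun x => \row_(j < n) ('d W x (delta_mx 0 j) : R))}.

(* Proper piecewise C^1 on O (V is a total function, only its values on O matter). *)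
Definition proper_pwC1 (R : realType) (n : nat) (O : set 'rV[R]_n) (V : 'rV[R]_n -> R) : Prop :=
  {in O, continuous V} /\
  exists (N : nat) (X : 'I_N -> set 'rV[R]_n) (Oi : 'I_N -> set 'rV[R]_n)
         (W : 'I_N -> 'rV[R]_n -> R),
    (forall i, closed (X i)) /\
    (forall i, open (Oi i)) /\
    (forall i, C1_on (Oi i) (W i)) /\
    (forall i, X i `&` O `<=` Oi i) /\
    (forall i, closure (interior (X i)) = X i) /\
    (O `<=` \bigcup_i X i) /\
    (forall i x, X i x -> O x -> V x = W i x).

Definition vmax (R : realType) (n K : nat) (hK : (0 < K)%N) (V : 'I_K -> 'rV[R]_n -> R) :=
  fun x => \big[Num.max/V (Ordinal hK) x]_(i < K) V i x.
Definition vmin (R : realType) (n K : nat) (hK : (0 < K)%N) (V : 'I_K -> 'rV[R]_n -> R) :=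
  fun x => \big[Num.min/V (Ordinal hK) x]_(i < K) V i x.

(* Main.v *)
Require Import Defs.
From HB Require Import structures.
From mathcomp Require Import all_boot all_order all_algebra.
From mathcomp Require Import all_classical all_reals all_analysis.
Import Order.TTheory GRing.Theory Num.Theory.
Import numFieldNormedType.Exports.
Local Open Scope classical_set_scope.
Local Open Scope ring_scope.

Lemma cover_int (Tt : topologicalType) (I : eqType) (G : I -> set Tt)
  (s : seq I) (U : set Tt) :
  open U -> U !=set0 -> (forall y, U y -> exists2 i, i \in s & G i y) ->
  (forall i y, U y -> closure (G i) y -> G i y) ->
  exists2 i, i \in s & (U `&` interior (G i)) !=set0.
Proof.
elim: s U => [|a s IH] U oU [y Uy] cov rc.
  by case: (cov y Uy).
have [ne|e] := pselect ((U `&` interior (G a)) !=set0).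
  by exists a => //; rewrite mem_head.
have [[z [Uz nGz]]|sub] := pselect (exists z, U z /\ ~ G a z); last first.
  exfalso; apply: e; exists y; split => //.
  have : U `<=` G a.
    by move=> w Uw; apply: contrapT => nw; apply: sub; exists w.
  by rewrite (open_subsetE _ oU); apply.
set U' := U `&` ~` closure (G a).
have oU' : open U'.
  by apply: openI => //; apply: closed_openC; exact: closed_closure.
have U'z : U' z by split => // /(rc a z Uz).
have [i iS [w [[Uw _] iw]]] : exists2 i, i \in s & (U' `&` interior (G i)) !=set0.
  apply: IH => //; first by exists z.
    move=> v [Uv ncl]; have [i] := cov v Uv; rewrite in_cons => /orP [/eqP ->|].
      by move=> Gv; exfalso; apply: ncl; exact: subset_closure.
    by move=> iS Gv; exists i.
  by move=> i v [Uv _]; exact: rc.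
by exists i; [rewrite in_cons iS orbT|exists w].
Qed.

Section Gen.
Context {R : realType} {n : nat}.

Lemma pw_gen (O : set 'rV[R]_n) (hO : open O) (K : nat)
  (V : 'I_K -> 'rV[R]_n -> R) (F : 'rV[R]_n -> R)
  (Nf : 'I_K -> nat) (X Oi : forall k, 'I_(Nf k) -> set 'rV[R]_n)
  (W : forall k, 'I_(Nf k) -> 'rV[R]_n -> R)
  (H : forall k,
    (forall i, closed (X k i)) /\
    (forall i, open (Oi k i)) /\
    (forall i, C1_on (Oi k i) (W k i)) /\
    (forall i, X k i `&` O `<=` Oi k i) /\
    (forall i, closure (interior (X k i)) = X k i) /\
    (O `<=` \bigcup_i X k i) /\
    (forall i x, X k i x -> O x -> V k x = W k i x))
  (hVc : forall k, {in O, continuous (V k)})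
  (hF : {in O, continuous F})
  (hsel : forall x, O x -> exists k, F x = V k x) :
  proper_pwC1 O F.
Proof.
split => //.
pose I : finType := {k : 'I_K & 'I_(Nf k)}.
pose G (s : I) := [set y | O y /\ X (tag s) (tagged s) y /\ V (tag s) y = F y].
pose Y (s : I) := closure (interior (G s)).
have rcG : forall s y, O y -> closure (G s) y -> G s y.
  case=> k i y Oy cl /=; split => //.
  have [cX [_ [_ [_ [_ [_ _]]]]]] := H k.
  split.
    rewrite ((closure_id (X k i)).1 (cX i)).
    by apply: (closureS _ cl) => w [_ []].
  apply: contrapT => /eqP ne.
  have cvh := cvgB (hVc k y (mem_set Oy)) (hF y (mem_set Oy)).
  have nb : \forall t \near y, V k t - F t != 0.
    apply: (@cvgr_neq0 _ _ _ _ (nbhs_filter y) (fun t => V k t - F t) (V k y - F y)).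
      exact: (cvh (nbhs_filter y)).
    by rewrite subr_eq0.
  have [w [[_ [_ ew]] /= nw]] := cl _ nb.
  by move: nw; rewrite ew subrr eqxx.
have YG : forall s y, O y -> Y s y -> G s y.
  move=> s y Oy Ys; apply: rcG => //.
  exact: (closureS (@interior_subset _ _) Ys).
exists #|I|, (fun i => Y (enum_val i)),
  (fun i => Oi (tag (enum_val i)) (tagged (enum_val i))),
  (fun i => W (tag (enum_val i)) (tagged (enum_val i))).
split; first by move=> i; exact: closed_closure.
split; first by move=> i; have [_ [hO' _]] := H (tag (enum_val i)); exact: hO'.
split; first by move=> i; have [_ [_ [hW _]]] := H (tag (enum_val i)); exact: hW.
split.
  move=> i y [Yy Oy]; have [Oy' [Xy _]] := YG _ _ Oy Yy.
  have [_ [_ [_ [hXO _]]]] := H (tag (enum_val i)); exact: hXO.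
split; first by move=> i; exact: (closure_interior_idem (G (enum_val i))).
split; last first.
  move=> i x Yx Ox; have [_ [_ <-]] := YG _ _ Ox Yx.
  have [_ [_ [_ [_ [_ [_ hVW]]]]]] := H (tag (enum_val i)).
  by apply: hVW => //; have [_ []] := YG _ _ Ox Yx.
move=> x Ox.
suff [s Ys] : exists s, Y s x.
  by exists (enum_rank s) => //=; rewrite enum_rankK.
apply: contrapT => nY.
pose B := O `&` ~` (\bigcup_(s in [set: I]) Y s).
have oB : open B.
  apply: openI => //; apply: closed_openC; apply: closed_bigcup.
    exact: finite_finset.
  by move=> s _; exact: closed_closure.
have [s _ [z [[_ nz] iz]]] : exists2 s, s \in enum I & (B `&` interior (G s)) !=set0.
  apply: cover_int => //.
  - by exists x; split => // -[s _ Ys]; apply: nY; exists s.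
  - move=> y [Oy _]; have [k ek] := hsel y Oy.
    have [_ [_ [_ [_ [_ [hcov _]]]]]] := H k.
    have [i _ Xy] := hcov y Oy.
    by exists (Tagged (fun k => 'I_(Nf k)) i); rewrite ?mem_enum //.
  - by move=> s y [Oy _]; exact: rcG.
by apply: nz; exists s => //; exact: subset_closure.
Qed.

End Gen.

Section Big.
Context {R : realType} {n : nat} (K : nat) (V : 'I_K -> 'rV[R]_n -> R).

Lemma big_max_cont (O : set 'rV[R]_n) (k0 : 'I_K)
  (hVc : forall k, {in O, continuous (V k)}) (s : seq 'I_K) :
  {in O, continuous (fun y => \big[Num.max/V k0 y]_(i <- s) V i y)}.
Proof.
move=> x Ox; elim: s => [|a s IH].
  have -> : (fun y => \big[Num.max/V k0 y]_(i <- [::]) V i y) = V k0.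
    by apply/funext => y; rewrite big_nil.
  exact: hVc.
have -> : (fun y => \big[Num.max/V k0 y]_(i <- a :: s) V i y) =
   (V a \max (fun y => \big[Num.max/V k0 y]_(i <- s) V i y)).
  by apply/funext => y; rewrite big_cons.
exact: continuous_max (hVc a x Ox) IH.
Qed.

Lemma big_min_cont (O : set 'rV[R]_n) (k0 : 'I_K)
  (hVc : forall k, {in O, continuous (V k)}) (s : seq 'I_K) :
  {in O, continuous (fun y => \big[Num.min/V k0 y]_(i <- s) V i y)}.
Proof.
move=> x Ox; elim: s => [|a s IH].
  have -> : (fun y => \big[Num.min/V k0 y]_(i <- [::]) V i y) = V k0.
    by apply/funext => y; rewrite big_nil.
  exact: hVc.
have -> : (fun y => \big[Num.min/V k0 y]_(i <- a :: s) V i y) =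
   (V a \min (fun y => \big[Num.min/V k0 y]_(i <- s) V i y)).
  by apply/funext => y; rewrite big_cons.
exact: continuous_min (hVc a x Ox) IH.
Qed.

Lemma big_max_sel (k0 : 'I_K) x :
  exists k, \big[Num.max/V k0 x]_(i < K) V i x = V k x.
Proof.
apply: (big_ind (fun v => exists k, v = V k x)); first by exists k0.
  move=> a b [i ->] [j ->]; rewrite maxEle; case: ifP => _; by [exists j|exists i].
by move=> i _; exists i.
Qed.

Lemma big_min_sel (k0 : 'I_K) x :
  exists k, \big[Num.min/V k0 x]_(i < K) V i x = V k x.
Proof.
apply: (big_ind (fun v => exists k, v = V k x)); first by exists k0.
  move=> a b [i ->] [j ->]; rewrite minEle; case: ifP => _; by [exists i|exists j].
by move=> i _; exists i.
Qed.
End Big.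

Theorem proposition3 (R : realType) (n : nat) (O : set 'rV[R]_n) (hO : open O)
  (K : nat) (hK : (0 < K)%N) (V : 'I_K -> 'rV[R]_n -> R)
  (hV : forall i, proper_pwC1 O (V i)) :
  proper_pwC1 O (vmax hK V) /\ proper_pwC1 O (vmin hK V).
Proof.
have D : forall k, {Nk : nat & {Xk : 'I_Nk -> set 'rV[R]_n &
   {Ok : 'I_Nk -> set 'rV[R]_n & {Wk : 'I_Nk -> 'rV[R]_n -> R |
    (forall i, closed (Xk i)) /\
    (forall i, open (Ok i)) /\
    (forall i, C1_on (Ok i) (Wk i)) /\
    (forall i, Xk i `&` O `<=` Ok i) /\
    (forall i, closure (interior (Xk i)) = Xk i) /\
    (O `<=` \bigcup_i Xk i) /\
    (forall i x, Xk i x -> O x -> V k x = Wk i x)}}}}.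
  move=> k; case: (hV k) => _ /cid [Nk /cid [Xk /cid [Ok /cid [Wk Hk]]]].
  by exists Nk, Xk, Ok, Wk.
have hVc : forall k, {in O, continuous (V k)} by move=> k; case: (hV k).
pose Nf k := projT1 (D k).
pose X k : 'I_(Nf k) -> set 'rV[R]_n := projT1 (projT2 (D k)).
pose Oi k : 'I_(Nf k) -> set 'rV[R]_n := projT1 (projT2 (projT2 (D k))).
pose W k : 'I_(Nf k) -> 'rV[R]_n -> R := proj1_sig (projT2 (projT2 (projT2 (D k)))).
have H k := proj2_sig (projT2 (projT2 (projT2 (D k)))).
split.
  apply: (@pw_gen R n O hO K V _ Nf X Oi W H hVc).
    exact: big_max_cont.
  by move=> x _; exact: big_max_sel.
apply: (@pw_gen R n O hO K V _ Nf X Oi W H hVc).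
  exact: big_min_cont.
by move=> x _; exact: big_min_sel.
Qed.
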